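(* Let $\alpha,\beta\ge1$. For every $p\in\mathcal{P}_{\alpha,\beta}$, the total degree of $\pi(p)\in k[\mathbf{x}]$ equals $\deg(f_{[n]})\,\alpha+\beta$, and in particular is at least $3$.
   Context: Let $k$ be a field of characteristic zero, $n\ge3$, $k[\mathbf{x}]=k[x_1,\ldots,x_n]$, $k[t,\mathbf{x}]=k[t,x_1,\ldots,x_n]$. $D=\sum_{j=1}^{n-1}(n-j)\,x_{j+1}\,\partial/\partial x_j$. $f_{[2m-1]}=\frac12\sum_{i=1}^{2m-1}(-1)^{i-1}\binom{2m-2}{i-1}x_ix_{2m-i}$ for $n=2m-1$, $m\ge2$; $f_{[2m]}=D(f_{[2m-1]})^2-2D^2(f_{[2m-1]})f_{[2m-1]}$ for $n=2m$, $m\ge2$ (a nonzero homogeneous polynomial of degree $2$ resp. $4$). $\pi:k[t,\mathbf{x}]\to k[\mathbf{x}]$ is the $k[\mathbf{x}]$-algebra map with $t\mapsto f_{[n]}$. For nonzero $p$, $\mathrm{supp}(p)$ is the set of exponent vectors $(i_0,\ldots,i_n)$ of monomials $t^{i_0}x_1^{i_1}\cdots x_n^{i_n}$ with nonzero coefficient, $\deg_{\mathbf w}(p)=\max\{\sum_j i_jw_j:(i_0,\ldots,i_n)\in\mathrm{supp}(p)\}$, and $\mathrm{lt}(p)$ is the leading term for the lexicographic order with $t>x_1>\cdots>x_n$. With $\mathbf{w}_1=(1,\ldots,1)$ and $\mathbf{w}_2$ the weight with $n-2$ on $t$ and $2n-j-1$ on $x_j$, $\mathcal{P}_{\alpha,\beta}$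 is the set of nonzero $p\in k[t,\mathbf{x}]$ with $\deg_{\mathbf{w}_1}(p)\le\alpha+\beta$, $\deg_{\mathbf{w}_2}(p)\le(n-2)\alpha+(n-1)\beta$ and $\mathrm{lt}(p)\in k^*t^\alpha x_n^\beta$. *)

(* Defs.v *)
From HB Require Import structures.
From mathcomp Require Import all_boot all_order all_algebra.
From mathcomp Require Import mpoly.
Set Implicit Arguments. Unset Strict Implicit. Unset Printing Implicit Defensive.
Import Order.TTheory GRing.Theory.
Local Open Scope ring_scope.

(* Variables of k[x] = {mpoly k[n]} : x_1,...,x_n are 'X_0,...,'X_(n-1).
   Variables of k[t,x] = {mpoly k[n.+1]} : t is 'X_0, x_j is 'X_j. *)

Section Defs.
Variables (k : fieldType) (n : nat).

(* D = sum_{j=1}^{n-1} (n-j) x_{j+1} d/dx_j ; in 0-based indices: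
   x_{j} = 'X_(j-1), so the term for 0-based i (= j-1) is
   (n - (i+1)) 'X_(i+1) * d/d'X_i. *)
Definition Dop (p : {mpoly k[n]}) : {mpoly k[n]} :=
  \sum_(i < n) \sum_(j < n | val j == (val i).+1)
     (n - val j)%:R *: ('X_j * mderiv i p).

(* f_{[2m-1]} = 1/2 sum_{i=1}^{2m-1} (-1)^{i-1} C(2m-2,i-1) x_i x_{2m-i},
   viewed in k[x_1..x_n]; 0-based: i' = i-1, partner index 2m-2-i'. *)
Definition f_odd (m : nat) : {mpoly k[n]} :=
  2%:R^-1 *: \sum_(i < n) \sum_(j < n | (val i + val j == (2 * m - 2)%N))
     (((-1) ^+ val i) * ('C(2 * m - 2, val i))%:R) *: ('X_i * 'X_j).

Definition f_n : {mpoly k[n]} :=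
  if odd n then f_odd (n.+1./2)
  else Dop (f_odd (n./2)) ^+ 2 - 2%:R * Dop (Dop (f_odd (n./2))) * f_odd (n./2).

Definition pi_f (p : {mpoly k[n.+1]}) : {mpoly k[n]} :=
  comp_mpoly (cons_tuple f_n (mktuple (fun i : 'I_n => 'X_i))) p.

Definition totdeg (N : nat) (q : {mpoly k[N]}) : nat := (msize q).-1.

Definition wdeg (w : 'I_n.+1 -> nat) (p : {mpoly k[n.+1]}) : nat :=
  \max_(m <- msupp p) \sum_(i < n.+1) w i * m i.

Definition w1 (i : 'I_n.+1) : nat := 1.
Definition w2 (i : 'I_n.+1) : nat :=
  if val i == 0%N then (n - 2)%N else (2 * n - val i - 1)%N.

(* lexicographic order with t > x_1 > ... > x_n *)
Definition mlexlt (m1 m2 : 'X_{1..n.+1}) : bool :=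
  [exists i : 'I_n.+1,
     [forall j : 'I_n.+1, (val j < val i)%N ==> (m1 j == m2 j)] && (m1 i < m2 i)%N].

Definition mono_tx (a b : nat) : 'X_{1..n.+1} :=
  [multinom (if val i == 0%N then a else if val i == n then b else 0%N) | i < n.+1].

(* lt(p) in k^* t^a x_n^b : the lex-largest monomial of supp(p) is t^a x_n^b *)
Definition lt_is (p : {mpoly k[n.+1]}) (a b : nat) : Prop :=
  mono_tx a b \in msupp p /\
  forall m, m \in msupp p -> m != mono_tx a b -> mlexlt m (mono_tx a b).

Definition calP (a b : nat) (p : {mpoly k[n.+1]}) : Prop :=
  [/\ p != 0,
      (wdeg w1 p <= a + b)%N,
      (wdeg w2 p <= (n - 2) * a + (n - 1) * b)%N
    & lt_is p a b].

End Defs.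

(* Main.v *)
Require Import Defs.
From HB Require Import structures.
From mathcomp Require Import all_boot all_order all_algebra.
From mathcomp Require Import mpoly.
From mathcomp Require Import zify ring lra.
Set Implicit Arguments. Unset Strict Implicit. Unset Printing Implicit Defensive.
Import GRing.Theory.
Local Open Scope ring_scope.



Section Aux.
Variable (k : idomainType) (N : nat).
Implicit Types p q : {mpoly k[N]}.

Lemma msizeM_lei p q : (msize (p * q) <= (msize p + msize q).-1)%N.
Proof.
have [->|nzp] := eqVneq p 0; first by rewrite mul0r msize0.
have [->|nzq] := eqVneq q 0; first by rewrite mulr0 msize0.
by rewrite msizeM.
Qed.

Lemma msizeX_lei p e : (msize (p ^+ e) <= e * (msize p).-1 + 1)%N.
Proof.
elim: e => [|e IH]; first by rewrite expr0 msize1.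
rewrite exprS; apply: leq_trans (msizeM_lei _ _) _.
have [p0|nzp] := eqVneq p 0.
  rewrite p0 msize0 in IH *; move: IH; rewrite /=; move: (msize _) => a; lia.
have: (0 < msize p)%N by rewrite lt0n msize_poly_eq0.
move=> h; move: IH h; move: (msize p) (msize (p ^+ e)) => a b; case: a => // a; rewrite /=; lia.
Qed.

Lemma msizeXi p e : p != 0 -> msize (p ^+ e) = (e * (msize p).-1 + 1)%N.
Proof.
move=> nzp; elim: e => [|e IH]; first by rewrite expr0 msize1.
rewrite exprS msizeM ?expf_neq0 // IH.
have: (0 < msize p)%N by rewrite lt0n msize_poly_eq0.
case: (msize p) => // a _ /=; lia.
Qed.

Lemma msize_prod_le (M : nat) (q : 'I_M -> {mpoly k[N]}) (e : 'I_M -> nat) :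
  (msize (\prod_(i < M) q i ^+ e i) <= (\sum_(i < M) e i * (msize (q i)).-1) + 1)%N.
Proof.
elim: M q e => [|M IH] q e; first by rewrite !big_ord0 msize1.
rewrite !big_ord_recr /=. apply: leq_trans (msizeM_lei _ _) _.
have := IH (fun i => q (widen_ord (leqnSn M) i)) (fun i => e (widen_ord (leqnSn M) i)).
have := msizeX_lei (q ord_max) (e ord_max).
set S := (\sum_(i < M) _)%N; set A := mmeasure _ (\prod_(i < M) _); set B := mmeasure _ (_ ^+ _); set c := (e ord_max * _)%N.
rewrite -subn1; lia.
Qed.

Lemma msizeD_eq p q : (msize q < msize p)%N -> msize (p + q) = msize p.
Proof.
move=> lt; apply/eqP; rewrite eqn_leq; apply/andP; split.
  by apply: leq_trans (msizeD_le _ _) _; rewrite geq_max leqnn ltnW.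
have nzp : p != 0 by rewrite -msize_poly_eq0 -lt0n (leq_ltn_trans _ lt).
rewrite -(mlead_deg nzp); apply: msize_mdeg_lt.
rewrite mcoeff_msupp mcoeffD.
have -> : q@_(mlead p) = 0.
  by apply/eqP; rewrite mcoeff_eq0; apply: msize_mdeg_ge; rewrite -ltnS (mlead_deg nzp).
by rewrite addr0 mleadc_eq0.
Qed.

End Aux.




Lemma mderivXU (R : ringType) N (i j : 'I_N) :
  mderiv i ('X_j : {mpoly R[N]}) = (j == i)%:R.
Proof.
rewrite mderivX mnm1E; case: eqP => [->|ne].
  have -> : (U_(i) - U_(i) = 0)%MM by apply/mnmP => l; rewrite mnmBE subnn mnmE.
  by rewrite mpolyX0 scale1r.
by rewrite scale0r.
Qed.

Lemma dsum1 (V : nmodType) N (P : 'I_N -> 'I_N -> bool) (F : 'I_N -> 'I_N -> V) i1 j1 :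
  P i1 j1 -> (forall i j, P i j -> (i != i1) || (j != j1) -> F i j = 0) ->
  \sum_i \sum_(j | P i j) F i j = F i1 j1.
Proof.
move=> P1 H; rewrite pair_big_dep (bigD1 (i1, j1)) //= big1 ?addr0 //.
move=> [i j] /andP [/= Pij ne]; apply: H => //.
by move: ne; rewrite xpair_eqE negb_and.
Qed.

Lemma dsum2 (V : nmodType) N (P : 'I_N -> 'I_N -> bool) (F : 'I_N -> 'I_N -> V) i1 j1 i2 j2 :
  i1 != i2 -> P i1 j1 -> P i2 j2 ->
  (forall i j, P i j -> (i != i1) || (j != j1) -> (i != i2) || (j != j2) -> F i j = 0) ->
  \sum_i \sum_(j | P i j) F i j = F i1 j1 + F i2 j2.
Proof.
move=> ne12 P1 P2 H; rewrite pair_big_dep (bigD1 (i1, j1)) //= (bigD1 (i2, j2)) /=; last first.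
  by rewrite P2 xpair_eqE negb_and eq_sym ne12.
rewrite big1 ?addr0 //.
move=> [i j] /andP [/andP [/= Pij ne1] ne2]; apply: H => //.
  by move: ne1; rewrite xpair_eqE negb_and.
by move: ne2; rewrite xpair_eqE negb_and.
Qed.

Section Phi.
Variables (k : fieldType) (n : nat).

Definition psi (i : 'I_n) : {mpoly k[n]} :=
  if (val i == 0%N) || (val i == n.-1) then 'X_i else 0.

Definition phi (q : {mpoly k[n]}) : {mpoly k[n]} :=
  comp_mpoly [tuple psi i | i < n] q.

Lemma phiX i : phi 'X_i = psi i.
Proof. by rewrite /phi comp_mpolyXU -tnth_nth tnth_mktuple. Qed.

Lemma msize_psi i : ((msize (psi i)).-1 <= 1)%N.
Proof. by rewrite /psi; case: ifP => _; rewrite ?msizeX ?mdeg1 ?msize0. Qed.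

Lemma msize_phi q : (msize (phi q) <= msize q)%N.
Proof.
rewrite /phi comp_mpolyE; apply: leq_trans (msize_sum _ _ _) _.
apply/bigmax_leqP_seq => m msm _; apply: leq_trans (msizeZ_le _ _) _.
apply: leq_trans; first exact: (@msize_prod_le k n n (fun i => tnth [tuple psi i0 | i0 < n] i) (fun i => m i)).
have := msize_mdeg_lt msm; rewrite mdegE.
have : (\sum_(i < n) m i * (msize (tnth [tuple psi i0 | i0 < n] i)).-1 <= \sum_(i < n) m i)%N.
  apply: leq_sum => i _; rewrite tnth_mktuple.
  by rewrite -[X in (_ <= X)%N]muln1 leq_mul2l msize_psi orbT.
move=> h1 h2; rewrite addn1; exact: leq_ltn_trans h1 h2.
Qed.

Lemma phiZ c q : phi (c *: q) = c *: phi q.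
Proof. by rewrite /phi comp_mpolyZ. Qed.
Lemma phiM p q : phi (p * q) = phi p * phi q.
Proof. by rewrite /phi rmorphM. Qed.
Lemma phiB p q : phi (p - q) = phi p - phi q.
Proof. by rewrite /phi rmorphB. Qed.
Lemma phiXn p e : phi (p ^+ e) = phi p ^+ e.
Proof. by rewrite /phi rmorphXn. Qed.
Lemma phi_nat e : phi e%:R = e%:R.
Proof. by rewrite /phi rmorph_nat. Qed.
Lemma phi_sum (I : Type) (r : seq I) (P : pred I) (F : I -> {mpoly k[n]}) :
  phi (\sum_(i <- r | P i) F i) = \sum_(i <- r | P i) phi (F i).
Proof. by rewrite /phi raddf_sum. Qed.
End Phi.




Ltac simpl_ord := repeat match goal with |- context [@val _ _ _ (@Ordinal ?n ?i ?h)] => change (val (Ordinal h)) with i end.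

Lemma mderiv_sum (R : ringType) N (i : 'I_N) (I : Type) (r : seq I) (P : pred I) (F : I -> {mpoly R[N]}) :
  mderiv i (\sum_(x <- r | P x) F x) = \sum_(x <- r | P x) mderiv i (F x).
Proof. by elim/big_rec2: _ => [|x a b _ <-]; rewrite ?mderiv0 ?mderivD. Qed.

Section Fn.
Variables (k : fieldType) (n : nat).
Hypothesis char0 : [pchar k] =i pred0.
Hypothesis hn : (3 <= n)%N.

Let n0 : (0 < n)%N. Proof. lia. Qed.
Let nl : (n.-1 < n)%N. Proof. lia. Qed.
Definition o0 : 'I_n := Ordinal n0.
Definition ol : 'I_n := Ordinal nl.

Lemma two_neq0 : (2%:R : k) != 0.
Proof. by move/pcharf0P: char0 => ->. Qed.

Lemma psi_o0 : psi k o0 = 'X_o0.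
Proof. by rewrite /psi eqxx. Qed.
Lemma psi_ol : psi k ol = 'X_ol.
Proof. by rewrite /psi /= eqxx orbT. Qed.

Lemma phi_fodd : odd n -> phi (f_odd k n (n.+1./2)) = 'X_o0 * 'X_ol.
Proof.
move=> on.
have e2 : (2 * n.+1./2 - 2 = n.-1)%N.
  have := odd_double_half n; rewrite -uphalfE uphalf_half on -muln2 /=; lia.
rewrite /f_odd phiZ phi_sum.
under eq_bigr => i _ do rewrite phi_sum.
under eq_bigr => i _ do under eq_bigr => j _ do rewrite phiZ phiM !phiX.
rewrite (@dsum2 _ _ _ _ o0 ol ol o0).
- have hodd : odd n.-1 = false by move: on; case: (n) => //= m; case: (odd m).
  rewrite e2 /= psi_o0 psi_ol expr0 bin0 mul1r binn -signr_odd hodd expr0 mul1r !scale1r.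
  rewrite [X in _ + X]mulrC -mulr2n -scaler_nat scalerA mulVf ?two_neq0 // scale1r //.
- by apply/eqP => /(congr1 val) /=; lia.
- by rewrite e2 /=; apply/eqP; lia.
- by rewrite e2 /=; apply/eqP; lia.
move=> [i ib] [j jb] /eqP /= hij h1 h2; rewrite /psi; case: ifP => hi; case: ifP => hj; rewrite ?mul0r ?mulr0 ?scaler0 //.
exfalso; move: h1 h2 hi hj hij; rewrite -!val_eqE e2 /=; simpl_ord; lia.
Qed.
Let ni : (n - 2 < n)%N. Proof. lia. Qed.
Definition oi : 'I_n := Ordinal ni.

Lemma even_e2 : ~~ odd n -> (2 * n./2 - 2 = n - 2)%N.
Proof. move=> en; have := odd_double_half n; rewrite (negbTE en) -muln2 /=; lia. Qed.

Lemma phi_g : ~~ odd n -> phi (f_odd k n (n./2)) = 0.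
Proof.
move=> en; rewrite /f_odd phiZ phi_sum big1 ?scaler0 // => i _.
rewrite phi_sum big1 // => j /eqP hij.
rewrite phiZ phiM !phiX /psi; case: ifP => hi; case: ifP => hj; rewrite ?mul0r ?mulr0 ?scaler0 //.
exfalso; move: hi hj hij; rewrite even_e2 //; case: i => i ib; case: j => j jb /=; simpl_ord; lia.
Qed.

Lemma deriv_g : ~~ odd n -> mderiv oi (f_odd k n (n./2)) = 'X_o0.
Proof.
move=> en; rewrite /f_odd mderivZ mderiv_sum.
under eq_bigr => i _ do rewrite mderiv_sum.
under eq_bigr => i _ do under eq_bigr => j _ do rewrite mderivZ mderivM !mderivXU.
rewrite (@dsum2 _ _ _ _ oi o0 o0 oi).
- have hodd : odd (n - 2) = false.
    by rewrite oddB ?(negbTE en) //; lia.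
  rewrite even_e2 //= eqxx.
  have -> : (o0 == oi) = false by apply/eqP => /(congr1 val) /=; lia.
  rewrite expr0 bin0 mul1r binn -signr_odd hodd expr0 mul1r !scale1r.
  rewrite mul1r mulr0 addr0 mul0r add0r mulr1.
  rewrite -mulr2n -scaler_nat scalerA mulVf ?two_neq0 // scale1r //.
- by apply/eqP => /(congr1 val) /=; lia.
- by rewrite even_e2 //=; apply/eqP; lia.
- by rewrite even_e2 //=; apply/eqP; lia.
move=> i j /eqP hij h1 h2.
have -> : (i == oi) = false.
  apply/eqP => ei; move: h1 h2 hij; rewrite ei -!val_eqE even_e2 //=; case: j => j jb /=; simpl_ord; lia.
have -> : (j == oi) = false.
  apply/eqP => ej; move: h1 h2 hij; rewrite ej -!val_eqE even_e2 //=; case: i => i ib /=; simpl_ord; lia.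
by rewrite mul0r mulr0 addr0 scaler0.
Qed.

Lemma phi_Dg : ~~ odd n -> phi (Dop (f_odd k n (n./2))) = 'X_ol * 'X_o0.
Proof.
move=> en; rewrite /Dop phi_sum.
under eq_bigr => i _ do rewrite phi_sum.
under eq_bigr => i _ do under eq_bigr => j _ do rewrite phiZ phiM phiX.
rewrite (@dsum1 _ _ _ _ oi ol).
- rewrite deriv_g // phiX psi_o0 psi_ol /=.
  have -> : (n - n.-1 = 1)%N by lia.
  by rewrite scale1r.
- by rewrite /=; apply/eqP; lia.
move=> i j /eqP hij h1; rewrite /psi; case: ifP => hj; last by rewrite mul0r scaler0.
exfalso; move: h1 hj hij; rewrite -!val_eqE /=; case: i => i ib; case: j => j jb /=; simpl_ord; lia.
Qed.

Lemma phi_fn : phi (f_n k n) = if odd n then 'X_o0 * 'X_ol else ('X_ol * 'X_o0) ^+ 2.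
Proof.
rewrite /f_n; case: ifP => on; first exact: phi_fodd.
rewrite phiB phiXn !phiM phi_Dg ?on // phi_g ?on // mulr0 subr0 //.
Qed.

Lemma Xneq0 (i : 'I_n) : ('X_i : {mpoly k[n]}) != 0.
Proof. by rewrite -msize_poly_eq0 msizeX mdeg1. Qed.

Lemma msizeXX (i j : 'I_n) : msize ('X_i * 'X_j : {mpoly k[n]}) = 3%N.
Proof. by rewrite msizeM ?Xneq0 // !msizeX !mdeg1. Qed.

Lemma fn_size : (3 <= msize (f_n k n))%N.
Proof.
have := msize_phi (f_n k n); rewrite phi_fn; case: ifP => _; first by rewrite msizeXX.
rewrite msizeXi ?mulf_neq0 ?Xneq0 // msizeXX.
by apply: leq_trans.
Qed.

End Fn.




Section Main.
Variables (k : fieldType) (n : nat).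

Definition tl (m : 'X_{1..n.+1}) : 'X_{1..n} := [multinom m (lift ord0 i) | i < n].

Lemma mdeg_tl m : mdeg m = (m ord0 + mdeg (tl m))%N.
Proof.
rewrite !mdegE big_ord_recl; congr (_ + _)%N.
by apply: eq_bigr => i _; rewrite mnmE.
Qed.

Lemma pi_X m : pi_f 'X_[m] = (f_n k n) ^+ (m ord0) * 'X_[tl m].
Proof.
rewrite /pi_f comp_mpolyX big_ord_recl (tnth_nth 0) /=; congr (_ * _).
rewrite mpolyXE_id; apply: eq_bigr => i _.
by rewrite (tnthS (f_n k n) [tuple 'X_i0 | i0 < n] i) tnth_mktuple mnmE.
Qed.

Lemma mcoeff_sum (I : Type) (r : seq I) (P : pred I) (F : I -> {mpoly k[n]}) m :
  (\sum_(x <- r | P x) F x)@_m = \sum_(x <- r | P x) (F x)@_m.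
Proof. by elim/big_rec2: _ => [|x a b _ <-]; rewrite ?mcoeff0 ?mcoeffD. Qed.

End Main.

Theorem lemma5p4 (k : fieldType) (n : nat) (alpha beta : nat) (p : {mpoly k[n.+1]}) :
  [pchar k] =i pred0 ->
  (3 <= n)%N -> (1 <= alpha)%N -> (1 <= beta)%N ->
  calP alpha beta p ->
  totdeg (pi_f p) = (totdeg (f_n k n) * alpha + beta)%N /\ (3 <= totdeg (pi_f p))%N.
Proof.
move=> char0 hn ha hb [pnz hw1 _ [hmono hlt]].
set f := f_n k n.
have fsz : (3 <= msize f)%N := fn_size char0 hn.
have fnz : f != 0 by apply/eqP => f0; move: fsz; rewrite f0 msize0.
set mono := mono_tx n alpha beta.
have mono0 : mono ord0 = alpha by rewrite mnmE.
have H1 : forall m, m \in msupp p -> (mdeg m <= alpha + beta)%N.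
  move=> m hm; move/bigmax_leqP_seq: hw1 => /(_ m hm isT) h; apply: leq_trans _ h.
  by rewrite mdegE; apply/eq_leq/eq_bigr => i _; rewrite /w1 mul1n.
have H0 : forall m, m \in msupp p -> (m ord0 <= alpha)%N.
  move=> m hm; have [->|ne] := eqVneq m mono; first by rewrite mono0.
  have /existsP [i /andP [/forallP hj hi]] := hlt m hm ne.
  case: (unliftP ord0 i) => [j ej|ej]; subst i.
    by move/(_ ord0): hj; rewrite /= => /eqP ->; rewrite mono0.
  by rewrite -mono0 ltnW.
rewrite -/mono in hmono hlt.
have tlmono : mdeg (tl mono) = beta.
  rewrite mdegE; have nl : (n.-1 < n)%N by lia.
  rewrite (bigD1 (Ordinal nl)) //= big1 ?addn0.
    rewrite !mnmE /= /bump leq0n add1n prednK ?eqxx //; lia.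
  move=> i ne; rewrite !mnmE /= /bump leq0n add1n; case: ifP => [/eqP e|//]; exfalso; move/eqP: ne; apply; apply: val_inj => /=; lia.
have Pmono : (mono ord0 == alpha) && (mdeg mono == alpha + beta).
  by rewrite mono0 eqxx mdeg_tl mono0 tlmono eqxx.
pose P (m : 'X_{1..n.+1}) := (m ord0 == alpha) && (mdeg m == alpha + beta).
set G := \sum_(m <- msupp p | P m) p@_m *: 'X_[tl m].
set B := \sum_(m <- msupp p | ~~ P m) p@_m *: (f ^+ (m ord0) * 'X_[tl m]).
have eqpi : pi_f p = f ^+ alpha * G + B.
  rewrite {1}/pi_f comp_mpolyEX (bigID P) /=; congr (_ + _).
    rewrite mulr_sumr; apply: eq_bigr => m /andP [/eqP h0 _].
    by have := pi_X k m; rewrite /pi_f => ->; rewrite h0 scalerAr.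
  by apply: eq_bigr => m _; have := pi_X k m; rewrite /pi_f => ->.
have Gsz : msize G = beta.+1.
  apply/eqP; rewrite eqn_leq; apply/andP; split.
    apply: leq_trans; first exact: msize_sum.
    apply/bigmax_leqP_seq => m hm /andP [/eqP h0 /eqP hd].
    apply: leq_trans (msizeZ_le _ _) _; rewrite msizeX.
    by have := mdeg_tl m; lia.
  have : tl mono \in msupp G.
    rewrite mcoeff_msupp /G mcoeff_sum big_mkcond (bigD1_seq mono) //= ?msupp_uniq //.
    rewrite [P mono]Pmono mcoeffZ mcoeffX eqxx mulr1 big1 ?addr0 -?mcoeff_msupp //.
    move=> m ne; case: ifP => // /andP [/eqP h0 /eqP hd]; rewrite mcoeffZ mcoeffX.
    have -> : (tl m == tl mono) = false; last by rewrite mulr0.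
    apply/negbTE; apply: contra ne => /eqP e; apply/eqP/mnmP => i.
    case: (unliftP ord0 i) => [j ->|->]; last by rewrite h0 mono0.
    by move/mnmP: e => /(_ j); rewrite !mnmE.
  by move/msize_mdeg_lt; rewrite tlmono.
have Gnz : G != 0 by rewrite -msize_poly_eq0 Gsz.
set d := (msize f).-1.
have Asz : msize (f ^+ alpha * G) = (alpha * d + beta).+1.
  rewrite msizeM ?expf_neq0 // msizeXi // Gsz -/d addnS /=; lia.
have Bsz : (msize B <= alpha * d + beta)%N.
  apply: leq_trans; first exact: msize_sum.
  apply/bigmax_leqP_seq => m hm nP.
  apply: leq_trans (msizeZ_le _ _) _; apply: leq_trans (msizeM_lei _ _) _.
  have := msizeX_lei f (m ord0); rewrite msizeX.
  have := mdeg_tl m; have := H0 m hm; have := H1 m hm.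
  move: nP; rewrite /P negb_and.
  have hd : (2 <= d)%N by rewrite /d; lia.
  move: (m ord0) (mdeg m) (mdeg (tl m)) (msize (f ^+ m ord0)) hd => a b c s hd.
  rewrite -/d -subn1; case/orP => /eqP ne; nia.
split; rewrite /totdeg eqpi msizeD_eq Asz ?ltnS //= -/d.
  by rewrite mulnC.
have : (2 <= d)%N by rewrite /d; lia.
nia.
Qed.
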